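(* Consider a charged particle (mass $m>0$, charge $q$) moving in an external electromagnetic field with potential $(A^0,\mathbf A)$, described with the light-like parameter $\xi=ct-z$ by the Hamiltonian $\hat H(\hat{\mathbf x},\hat{\boldsymbol\Pi};\xi)$ defined in the context. (i) In a spacetime region where $A^\mu$ is independent of $t$, $\hat H$ is constant along the solutions of the Hamilton equations. (ii) More generally, if $A^0$ and $A^z$ are independent of $t$, then along any solution the dimensionless energy gain over $[\xi_0,\xi_1]$ is $$\mathcal E:=\frac{\hat H(\xi_1)-\hat H(\xi_0)}{mc^2}=\int_{\xi_0}^{\xi_1}\frac{d\xi}{2\hat s(\xi)}\,\frac{\partial\hat v}{\partial\xi}\big[\hat{\mathbf x}(\xi),\hat{\boldsymbol\Pi}(\xi);\xi\big],\qquad \hat v:=|\hat{\mathbf u}^{\perp}|^2 .$$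
   Context: Coordinates $\mathbf x=(x,y,z)$; superscript $\perp$ denotes $(x,y)$-components. For a field $f(t,\mathbf x)$, $\hat f(\xi,\hat{\mathbf x}):=f((\xi+\hat z)/c,\hat{\mathbf x})$; along a motion, $\hat g(\xi)$ denotes the value of a dynamical variable $g$ when $ct-z=\xi$; prime denotes $d/d\xi$. The Hamiltonian is $$\hat H(\hat{\mathbf x},\hat{\boldsymbol\Pi};\xi)=mc^2\,\frac{1+\hat s^2+|\hat{\mathbf u}^{\perp}|^2}{2\hat s}+q\hat A^0(\xi,\hat{\mathbf x}),\quad \hat{\mathbf u}^{\perp}=\frac{\hat{\boldsymbol\Pi}^{\perp}-q\hat{\mathbf A}^{\perp}(\xi,\hat{\mathbf x})}{mc^2},\quad \hat s=-\frac{\hat\Pi^z+q[\hat A^0-\hat A^z](\xi,\hat{\mathbf x})}{mc^2}>0,$$ with Hamilton equations $\hat{\mathbf x}'=\partial\hat H/\partial\hat{\boldsymbol\Pi}$, $\hat{\boldsymbol\Pi}'=-\partial\hat H/\partial\hat{\mathbf x}$ (equivalent to the relativistic Lorentz-force equations of motion; $\hat H$ equals the particle energy $mc^2\gamma+qA^0$). $\partial\hat v/\partial\xi$ denotes the partial derivative of $\hat v$, viewed as a function of $(\hat{\mathbf x},\hat{\boldsymbol\Pi},\xi)$, with respect to its explicit $\xi$-dependence. *)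

(* Defs.v *)
From Stdlib Require Import Reals.
From Coquelicot Require Import Coquelicot.
Open Scope R_scope.

(* A scalar field on spacetime, as a function of (t, x, y, z). *)
Definition field4 := R -> R -> R -> R -> R.

Record EMPot := { A0 : field4 ; Ax : field4 ; Ay : field4 ; Az : field4 }.

Definition pd_t (f : field4) t x y z := Derive (fun s => f s x y z) t.
Definition pd_x (f : field4) t x y z := Derive (fun s => f t s y z) x.
Definition pd_y (f : field4) t x y z := Derive (fun s => f t x s z) y.
Definition pd_z (f : field4) t x y z := Derive (fun s => f t x y s) z.

Definition uncurry4 (f : field4) : R * R * R * R -> R :=
  fun p => f (fst (fst (fst p))) (snd (fst (fst p))) (snd (fst p)) (snd p).

Definition C1_field (f : field4) : Prop :=
  (forall t x y z,
      ex_derive (fun s => f s x y z) t /\ ex_derive (fun s => f t s y z) x /\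
      ex_derive (fun s => f t x s z) y /\ ex_derive (fun s => f t x y s) z) /\
  (forall p : R * R * R * R,
      continuous (uncurry4 f) p /\ continuous (uncurry4 (pd_t f)) p /\
      continuous (uncurry4 (pd_x f)) p /\ continuous (uncurry4 (pd_y f)) p /\
      continuous (uncurry4 (pd_z f)) p).

Definition hat (c : R) (f : field4) (xi x y z : R) : R := f ((xi + z) / c) x y z.

Section Ham.
Variables (m c q : R) (F : EMPot).

Definition u_x (x y z Px Py Pz xi : R) : R :=
  (Px - q * hat c (Ax F) xi x y z) / (m * c ^ 2).
Definition u_y (x y z Px Py Pz xi : R) : R :=
  (Py - q * hat c (Ay F) xi x y z) / (m * c ^ 2).
Definition s_hat (x y z Px Py Pz xi : R) : R :=
  - (Pz + q * (hat c (A0 F) xi x y z - hat c (Az F) xi x y z)) / (m * c ^ 2).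
Definition v_hat (x y z Px Py Pz xi : R) : R :=
  (u_x x y z Px Py Pz xi) ^ 2 + (u_y x y z Px Py Pz xi) ^ 2.
Definition H_hat (x y z Px Py Pz xi : R) : R :=
  m * c ^ 2 * (1 + (s_hat x y z Px Py Pz xi) ^ 2 + v_hat x y z Px Py Pz xi)
    / (2 * s_hat x y z Px Py Pz xi)
  + q * hat c (A0 F) xi x y z.

Definition dH_dx  x y z Px Py Pz xi := Derive (fun w => H_hat w y z Px Py Pz xi) x.
Definition dH_dy  x y z Px Py Pz xi := Derive (fun w => H_hat x w z Px Py Pz xi) y.
Definition dH_dz  x y z Px Py Pz xi := Derive (fun w => H_hat x y w Px Py Pz xi) z.
Definition dH_dPx x y z Px Py Pz xi := Derive (fun w => H_hat x y z w Py Pz xi) Px.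
Definition dH_dPy x y z Px Py Pz xi := Derive (fun w => H_hat x y z Px w Pz xi) Py.
Definition dH_dPz x y z Px Py Pz xi := Derive (fun w => H_hat x y z Px Py w xi) Pz.

Definition dv_dxi x y z Px Py Pz xi := Derive (fun w => v_hat x y z Px Py Pz w) xi.

Definition hamilton_solution (a b : R) (X Y Z PX PY PZ : R -> R) : Prop :=
  forall xi, a < xi < b ->
    0 < s_hat (X xi) (Y xi) (Z xi) (PX xi) (PY xi) (PZ xi) xi /\
    is_derive X xi (dH_dPx (X xi) (Y xi) (Z xi) (PX xi) (PY xi) (PZ xi) xi) /\
    is_derive Y xi (dH_dPy (X xi) (Y xi) (Z xi) (PX xi) (PY xi) (PZ xi) xi) /\
    is_derive Z xi (dH_dPz (X xi) (Y xi) (Z xi) (PX xi) (PY xi) (PZ xi) xi) /\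
    is_derive PX xi (- dH_dx (X xi) (Y xi) (Z xi) (PX xi) (PY xi) (PZ xi) xi) /\
    is_derive PY xi (- dH_dy (X xi) (Y xi) (Z xi) (PX xi) (PY xi) (PZ xi) xi) /\
    is_derive PZ xi (- dH_dz (X xi) (Y xi) (Z xi) (PX xi) (PY xi) (PZ xi) xi).

End Ham.

(* Main.v *)
From Stdlib Require Import Reals Lra Psatz.
From Coquelicot Require Import Coquelicot.
Require Import Defs.
Open Scope R_scope.

Lemma deriv_cont_ed (X : R -> R) x l : is_derive X x l ->
  forall eps, 0 < eps -> exists d, 0 < d /\ forall h, Rabs h < d -> Rabs (X (x+h) - X x) < eps.
Proof.
  intros H eps He.
  assert (Hc : continuity_pt X x).
  { apply continuity_pt_filterlim. apply (ex_derive_continuous (K:=R_AbsRing) (V:=R_NormedModule)). eexists; eauto. }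
  destruct (Hc eps He) as [d [Hd Hd']].
  exists d; split; auto. intros h Hh.
  destruct (Req_dec h 0) as [->|Hn].
  - rewrite Rplus_0_r, Rminus_diag, Rabs_R0; auto.
  - apply (Hd' (x+h)). split. split; [exact I| lra].
    simpl. unfold R_dist. replace (x+h-x) with h by ring. auto.
Qed.

Lemma slot (F : R -> R -> R) (S : R -> R) xi dS :
  (forall s w, ex_derive (fun u => F u w) s) ->
  is_derive S xi dS ->
  (forall eta, 0 < eta -> exists d, 0<d /\ forall s h, Rabs (s - S xi) < d -> Rabs h < d ->
      Rabs (Derive (fun u => F u (xi+h)) s - Derive (fun u => F u xi) (S xi)) < eta) ->
  forall eps, 0<eps -> exists d, 0<d /\ forall h, h<>0 -> Rabs h < d ->
     Rabs ((F (S (xi+h)) (xi+h) - F (S xi) (xi+h))/h - Derive (fun u => F u xi) (S xi) * dS) < eps.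
Proof.
  intros HF HS Hcont eps He.
  set (L := Derive (fun u => F u xi) (S xi)).
  assert (HL : 0 <= Rabs L) by apply Rabs_pos.
  assert (HdS : 0 <= Rabs dS) by apply Rabs_pos.
  set (e1 := Rmin 1 (eps / (2 * (Rabs L + 1)))).
  assert (He1 : 0 < e1).
  { unfold e1. apply Rmin_glb_lt; [lra|]. apply Rdiv_lt_0_compat; lra. }
  assert (He1' : e1 * (Rabs L + 1) <= eps / 2).
  { unfold e1. apply Rle_trans with (eps / (2 * (Rabs L + 1)) * (Rabs L + 1)).
    apply Rmult_le_compat_r; [lra| apply Rmin_r]. right; field; lra. }
  assert (He1'' : e1 <= 1) by apply Rmin_l.
  destruct (proj1 (is_derive_Reals _ _ _) HS e1 He1) as [d1 Hd1].
  set (eta := eps / (2 * (Rabs dS + 1))).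
  assert (Heta : 0 < eta) by (apply Rdiv_lt_0_compat; lra).
  assert (Heta' : eta * (Rabs dS + 1) = eps / 2) by (unfold eta; field; lra).
  destruct (Hcont eta Heta) as [d2 [Hd2 Hd2']].
  destruct (deriv_cont_ed S xi dS HS d2 Hd2) as [d3 [Hd3 Hd3']].
  exists (Rmin d1 (Rmin d2 d3)). split.
  { apply Rmin_glb_lt; [apply cond_pos| apply Rmin_glb_lt; auto]. }
  intros h Hh0 Hh.
  assert (Hh1 : Rabs h < d1) by (eapply Rlt_le_trans; [exact Hh| apply Rmin_l]).
  assert (Hh2 : Rabs h < d2) by (eapply Rlt_le_trans; [exact Hh| eapply Rle_trans; [apply Rmin_r|apply Rmin_l]]).
  assert (Hh3 : Rabs h < d3) by (eapply Rlt_le_trans; [exact Hh| eapply Rle_trans; [apply Rmin_r|apply Rmin_r]]).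
  specialize (Hd1 h Hh0 Hh1). specialize (Hd3' h Hh3).
  destruct (MVT_gen (fun u => F u (xi+h)) (S xi) (S (xi+h)) (fun u => Derive (fun u => F u (xi+h)) u))
    as [sg [Hsg Hmvt]].
  { intros x _. exact (Derive_correct _ _ (HF x (xi+h))). }
  { intros x _. exact (proj2 (continuity_pt_filterlim _ _) (ex_derive_continuous _ _ (HF x (xi+h)))). }
  simpl in Hmvt. rewrite Hmvt.
  assert (Hsg' : Rabs (sg - S xi) < d2).
  { eapply Rle_lt_trans; [|exact Hd3'].
    unfold Rmin, Rmax in Hsg. destruct (Rle_dec (S xi) (S (xi+h))).
    - rewrite Rabs_pos_eq by lra. rewrite Rabs_pos_eq by lra. lra.
    - rewrite (Rabs_left (S (xi+h) - S xi)) by lra.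
      unfold Rabs; destruct (Rcase_abs (sg - S xi)); lra. }
  specialize (Hd2' sg h Hsg' Hh2). fold L in Hd2'.
  set (D := Derive (fun u => F u (xi + h)) sg) in *.
  set (Q := (S (xi + h) - S xi) / h) in *.
  replace (D * (S (xi + h) - S xi) / h - L * dS) with ((D - L) * Q + L * (Q - dS))
    by (unfold Q; field; auto).
  eapply Rle_lt_trans; [apply Rabs_triang|]. rewrite !Rabs_mult.
  assert (HQ : Rabs Q <= Rabs dS + 1).
  { replace Q with (dS + (Q - dS)) by ring.
    eapply Rle_trans; [apply Rabs_triang|]. lra. }
  assert (0 <= Rabs (D - L)) by apply Rabs_pos.
  assert (0 <= Rabs (Q - dS)) by apply Rabs_pos.
  assert (Rabs (D - L) * Rabs Q <= Rabs (D-L) * (Rabs dS + 1)) by (apply Rmult_le_compat_l; lra).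
  assert (Rabs (D - L) * (Rabs dS + 1) < eta * (Rabs dS + 1)) by (apply Rmult_lt_compat_r; lra).
  assert (Rabs L * Rabs (Q - dS) <= Rabs L * e1) by (apply Rmult_le_compat_l; lra).
  nra.
Qed.

Lemma cont4_ed (g : field4) t0 x0 y0 z0 :
  continuous (uncurry4 g) (t0,x0,y0,z0) ->
  forall eps, 0 < eps -> exists d, 0 < d /\ forall t x y z,
    Rabs (t - t0) < d -> Rabs (x - x0) < d -> Rabs (y - y0) < d -> Rabs (z - z0) < d ->
    Rabs (g t x y z - g t0 x0 y0 z0) < eps.
Proof.
  intros H eps He.
  destruct (proj1 (filterlim_locally _ _) H (mkposreal eps He)) as [d Hd].
  exists d; split; [apply cond_pos|].
  intros t x y z H1 H2 H3 H4.
  apply (Hd (t,x,y,z)). repeat split; assumption.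
Qed.

Lemma curves_close (X Y Z : R -> R) xi dX dY dZ :
  is_derive X xi dX -> is_derive Y xi dY -> is_derive Z xi dZ ->
  forall e, 0 < e -> exists d, 0 < d /\ forall h, Rabs h < d ->
    Rabs (X (xi+h) - X xi) < e /\ Rabs (Y (xi+h) - Y xi) < e /\ Rabs (Z (xi+h) - Z xi) < e.
Proof.
  intros HX HY HZ e He.
  destruct (deriv_cont_ed X xi dX HX e He) as [d1 [H1 H1']].
  destruct (deriv_cont_ed Y xi dY HY e He) as [d2 [H2 H2']].
  destruct (deriv_cont_ed Z xi dZ HZ e He) as [d3 [H3 H3']].
  exists (Rmin d1 (Rmin d2 d3)). split.
  { repeat apply Rmin_glb_lt; auto. }
  intros h Hh.
  assert (Rmin d1 (Rmin d2 d3) <= d1) by apply Rmin_l.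
  assert (Rmin d1 (Rmin d2 d3) <= d2) by (eapply Rle_trans; [apply Rmin_r|apply Rmin_l]).
  assert (Rmin d1 (Rmin d2 d3) <= d3) by (eapply Rle_trans; [apply Rmin_r|apply Rmin_r]).
  repeat split; [apply H1'|apply H2'|apply H3']; lra.
Qed.

Lemma chain4 (f : field4) (Hf : C1_field f) (T X Y Z : R -> R) xi dT dX dY dZ :
  is_derive T xi dT -> is_derive X xi dX -> is_derive Y xi dY -> is_derive Z xi dZ ->
  is_derive (fun w => f (T w) (X w) (Y w) (Z w)) xi
    (pd_t f (T xi) (X xi) (Y xi) (Z xi) * dT + pd_x f (T xi) (X xi) (Y xi) (Z xi) * dX
   + pd_y f (T xi) (X xi) (Y xi) (Z xi) * dY + pd_z f (T xi) (X xi) (Y xi) (Z xi) * dZ).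
Proof.
  intros HT HX HY HZ.
  destruct Hf as [Hd Hc].
  destruct (Hc (T xi, X xi, Y xi, Z xi)) as [_ [Ct [Cx [Cy Cz]]]].
  apply is_derive_Reals. intros eps He.
  assert (He4 : 0 < eps / 4) by lra.
  destruct (slot (fun s w => f s (X w) (Y w) (Z w)) T xi dT) with (eps := eps/4)
    as [d1 [Hd1 S1]]; auto.
  { intros s w. apply (Hd s (X w) (Y w) (Z w)). }
  { intros eta Heta.
    destruct (cont4_ed _ _ _ _ _ Ct eta Heta) as [d0 [Hd0 Hd0']].
    destruct (curves_close X Y Z xi dX dY dZ HX HY HZ d0 Hd0) as [d' [Hd' Hd'']].
    exists (Rmin d0 d'). split; [apply Rmin_glb_lt; auto|].
    intros s h Hs Hh.
    assert (Rmin d0 d' <= d0) by apply Rmin_l. assert (Rmin d0 d' <= d') by apply Rmin_r.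
    destruct (Hd'' h) as [A1 [A2 A3]]; [lra|].
    apply (Hd0' s (X (xi+h)) (Y (xi+h)) (Z (xi+h))); lra. }
  destruct (slot (fun s w => f (T xi) s (Y w) (Z w)) X xi dX) with (eps := eps/4)
    as [d2 [Hd2 S2]]; auto.
  { intros s w. apply (Hd (T xi) s (Y w) (Z w)). }
  { intros eta Heta.
    destruct (cont4_ed _ _ _ _ _ Cx eta Heta) as [d0 [Hd0 Hd0']].
    destruct (curves_close X Y Z xi dX dY dZ HX HY HZ d0 Hd0) as [d' [Hd' Hd'']].
    exists (Rmin d0 d'). split; [apply Rmin_glb_lt; auto|].
    intros s h Hs Hh.
    assert (Rmin d0 d' <= d0) by apply Rmin_l. assert (Rmin d0 d' <= d') by apply Rmin_r.
    destruct (Hd'' h) as [A1 [A2 A3]]; [lra|].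
    apply (Hd0' (T xi) s (Y (xi+h)) (Z (xi+h))); try lra.
    rewrite Rminus_diag, Rabs_R0; lra. }
  destruct (slot (fun s w => f (T xi) (X xi) s (Z w)) Y xi dY) with (eps := eps/4)
    as [d3 [Hd3 S3]]; auto.
  { intros s w. apply (Hd (T xi) (X xi) s (Z w)). }
  { intros eta Heta.
    destruct (cont4_ed _ _ _ _ _ Cy eta Heta) as [d0 [Hd0 Hd0']].
    destruct (curves_close X Y Z xi dX dY dZ HX HY HZ d0 Hd0) as [d' [Hd' Hd'']].
    exists (Rmin d0 d'). split; [apply Rmin_glb_lt; auto|].
    intros s h Hs Hh.
    assert (Rmin d0 d' <= d0) by apply Rmin_l. assert (Rmin d0 d' <= d') by apply Rmin_r.
    destruct (Hd'' h) as [A1 [A2 A3]]; [lra|].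
    apply (Hd0' (T xi) (X xi) s (Z (xi+h))); try lra;
    rewrite Rminus_diag, Rabs_R0; lra. }
  destruct (slot (fun s w => f (T xi) (X xi) (Y xi) s) Z xi dZ) with (eps := eps/4)
    as [d4 [Hd4 S4]]; auto.
  { intros s w. apply (Hd (T xi) (X xi) (Y xi) s). }
  { intros eta Heta.
    destruct (cont4_ed _ _ _ _ _ Cz eta Heta) as [d0 [Hd0 Hd0']].
    exists d0. split; auto.
    intros s h Hs Hh.
    apply (Hd0' (T xi) (X xi) (Y xi) s); try lra;
    rewrite Rminus_diag, Rabs_R0; lra. }
  assert (Hpos : 0 < Rmin (Rmin d1 d2) (Rmin d3 d4)).
  { repeat apply Rmin_glb_lt; auto. }
  exists (mkposreal _ Hpos). intros h Hh0 Hh. simpl in Hh.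
  assert (Rmin (Rmin d1 d2) (Rmin d3 d4) <= d1) by (eapply Rle_trans; [apply Rmin_l|apply Rmin_l]).
  assert (Rmin (Rmin d1 d2) (Rmin d3 d4) <= d2) by (eapply Rle_trans; [apply Rmin_l|apply Rmin_r]).
  assert (Rmin (Rmin d1 d2) (Rmin d3 d4) <= d3) by (eapply Rle_trans; [apply Rmin_r|apply Rmin_l]).
  assert (Rmin (Rmin d1 d2) (Rmin d3 d4) <= d4) by (eapply Rle_trans; [apply Rmin_r|apply Rmin_r]).
  specialize (S1 h Hh0 ltac:(lra)). specialize (S2 h Hh0 ltac:(lra)).
  specialize (S3 h Hh0 ltac:(lra)). specialize (S4 h Hh0 ltac:(lra)).
  simpl in S1, S2, S3, S4.
  unfold pd_t, pd_x, pd_y, pd_z.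
  match goal with |- Rabs (?a - ?b) < _ =>
  replace (a - b) with
   (((f (T (xi + h)) (X (xi + h)) (Y (xi + h)) (Z (xi + h)) - f (T xi) (X (xi + h)) (Y (xi + h)) (Z (xi + h))) / h
      - Derive (fun u => f u (X xi) (Y xi) (Z xi)) (T xi) * dT)
  + ((f (T xi) (X (xi + h)) (Y (xi + h)) (Z (xi + h)) - f (T xi) (X xi) (Y (xi + h)) (Z (xi + h))) / h
      - Derive (fun u => f (T xi) u (Y xi) (Z xi)) (X xi) * dX)
  + ((f (T xi) (X xi) (Y (xi + h)) (Z (xi + h)) - f (T xi) (X xi) (Y xi) (Z (xi + h))) / h
      - Derive (fun u => f (T xi) (X xi) u (Z xi)) (Y xi) * dY)
  + ((f (T xi) (X xi) (Y xi) (Z (xi + h)) - f (T xi) (X xi) (Y xi) (Z xi)) / h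
      - Derive (fun u => f (T xi) (X xi) (Y xi) u) (Z xi) * dZ)) by (field; auto) end.
  eapply Rle_lt_trans; [apply Rabs_triang|].
  eapply Rle_lt_trans; [apply Rplus_le_compat_r; apply Rabs_triang|].
  eapply Rle_lt_trans; [apply Rplus_le_compat_r; apply Rplus_le_compat_r; apply Rabs_triang|].
  lra.
Qed.


Definition Sf (m c q Pz a0 az : R) := - (Pz + q * (a0 - az)) / (m * c ^ 2).
Definition Uf (m c q P a : R) := (P - q * a) / (m * c ^ 2).
Definition Gf (m c q Px Py Pz a0 ax ay az : R) :=
  m * c ^ 2 * (1 + (Sf m c q Pz a0 az) ^ 2 + ((Uf m c q Px ax) ^ 2 + (Uf m c q Py ay) ^ 2))
    / (2 * Sf m c q Pz a0 az) + q * a0.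
Definition GSf m c q Px Py Pz a0 ax ay az :=
  let S := Sf m c q Pz a0 az in
  m * c ^ 2 * (2 * S ^ 2 - (1 + S ^ 2 + ((Uf m c q Px ax) ^ 2 + (Uf m c q Py ay) ^ 2))) / (2 * S ^ 2).
Definition cPx m c q Px (Py Pz a0 ax ay az : R) := Uf m c q Px ax / Sf m c q Pz a0 az.
Definition cPy m c q (Px Py Pz a0 ax ay az : R) := Uf m c q Py ay / Sf m c q Pz a0 az.
Definition cPz m c q (Px Py Pz a0 ax ay az : R) := - GSf m c q Px Py Pz a0 ax ay az / (m * c ^ 2).
Definition c0 m c q (Px Py Pz a0 ax ay az : R) := - q * GSf m c q Px Py Pz a0 ax ay az / (m * c ^ 2) + q.
Definition cx m c q (Px Py Pz a0 ax ay az : R) := - q * Uf m c q Px ax / Sf m c q Pz a0 az.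
Definition cy m c q (Px Py Pz a0 ax ay az : R) := - q * Uf m c q Py ay / Sf m c q Pz a0 az.
Definition cz m c q (Px Py Pz a0 ax ay az : R) := q * GSf m c q Px Py Pz a0 ax ay az / (m * c ^ 2).
Definition dGf m c q Px Py Pz a0 ax ay az d1 d2 d3 d4 d5 d6 d7 :=
  cPx m c q Px Py Pz a0 ax ay az * d1 + cPy m c q Px Py Pz a0 ax ay az * d2
  + cPz m c q Px Py Pz a0 ax ay az * d3 + c0 m c q Px Py Pz a0 ax ay az * d4
  + cx m c q Px Py Pz a0 ax ay az * d5 + cy m c q Px Py Pz a0 ax ay az * d6
  + cz m c q Px Py Pz a0 ax ay az * d7.

Lemma G_deriv m c q (p1 p2 p3 a0 ax ay az : R -> R) xi d1 d2 d3 d4 d5 d6 d7 :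
  0 < m -> 0 < c ->
  is_derive p1 xi d1 -> is_derive p2 xi d2 -> is_derive p3 xi d3 ->
  is_derive a0 xi d4 -> is_derive ax xi d5 -> is_derive ay xi d6 -> is_derive az xi d7 ->
  Sf m c q (p3 xi) (a0 xi) (az xi) <> 0 ->
  is_derive (fun w => Gf m c q (p1 w) (p2 w) (p3 w) (a0 w) (ax w) (ay w) (az w)) xi
    (dGf m c q (p1 xi) (p2 xi) (p3 xi) (a0 xi) (ax xi) (ay xi) (az xi) d1 d2 d3 d4 d5 d6 d7).
Proof.
  intros Hm Hc H1 H2 H3 H4 H5 H6 H7 HS.
  assert (HK : m * c ^ 2 <> 0) by (apply Rgt_not_eq; apply Rmult_gt_0_compat; [lra| apply pow_lt; lra]).
  unfold Gf, dGf, cPx, cPy, cPz, c0, cx, cy, cz, GSf, Sf, Uf in *.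
  assert (HN : p3 xi + q * (a0 xi - az xi) <> 0).
  { intro E. apply HS. rewrite E. unfold Rdiv. ring. }
  assert (Hm0 : m <> 0) by lra. assert (Hc0 : c <> 0) by lra.
  auto_derive.
  - repeat split; try (eexists; eassumption).
    replace (a0 xi + - az xi) with (a0 xi - az xi) by ring.
    assert (HiK : / (m * (c * (c * 1))) <> 0) by (apply Rinv_neq_0_compat; simpl in HK; rewrite Rmult_1_r in *; auto).
    intro E. apply Rmult_integral in E. destruct E as [E|E]; [lra|].
    apply Rmult_integral in E. destruct E as [E|E]; [apply HN; lra| contradiction].
  - replace (Derive (fun x => p1 x) xi) with d1 by (symmetry; apply is_derive_unique; exact H1).
    replace (Derive (fun x => p2 x) xi) with d2 by (symmetry; apply is_derive_unique; exact H2).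
    replace (Derive (fun x => p3 x) xi) with d3 by (symmetry; apply is_derive_unique; exact H3).
    replace (Derive (fun x => a0 x) xi) with d4 by (symmetry; apply is_derive_unique; exact H4).
    replace (Derive (fun x => ax x) xi) with d5 by (symmetry; apply is_derive_unique; exact H5).
    replace (Derive (fun x => ay x) xi) with d6 by (symmetry; apply is_derive_unique; exact H6).
    replace (Derive (fun x => az x) xi) with d7 by (symmetry; apply is_derive_unique; exact H7).
    field. repeat split; auto.
Qed.

Lemma is_derive_val (f : R -> R) x l l' : is_derive f x l -> l = l' -> is_derive f x l'.
Proof. intros H <-; exact H. Qed.

Lemma idd (x : R) : is_derive (fun t : R => t) x 1.
Proof. exact (is_derive_id x). Qed.

Lemma cstd (a x : R) : is_derive (fun _ : R => a) x 0.
Proof. exact (is_derive_const a x). Qed.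

Lemma lin_d (c z x : R) : c <> 0 -> is_derive (fun w => (x + w) / c) z (1 / c).
Proof. intros Hc. auto_derive; [auto|field; auto]. Qed.

Lemma lin_d2 (c z x : R) : c <> 0 -> is_derive (fun w => (w + x) / c) z (1 / c).
Proof. intros Hc. auto_derive; [auto|field; auto]. Qed.

Lemma hat_dxi (f : field4) (Hf : C1_field f) c x y z xi : 0 < c ->
  is_derive (fun w => hat c f w x y z) xi (pd_t f ((xi + z) / c) x y z / c).
Proof.
  intros Hc.
  eapply is_derive_val.
  - exact (chain4 f Hf (fun w => (w + z) / c) (fun _ => x) (fun _ => y) (fun _ => z) xi _ _ _ _
      (lin_d2 c xi z ltac:(lra)) (cstd x xi) (cstd y xi) (cstd z xi)).
  - simpl. field. lra.
Qed.

Lemma hat_dx (f : field4) (Hf : C1_field f) c x y z xi :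
  is_derive (fun w => hat c f xi w y z) x (pd_x f ((xi + z) / c) x y z).
Proof.
  exact (Derive_correct _ _ (proj1 (proj2 (proj1 Hf ((xi + z) / c) x y z)))).
Qed.

Lemma hat_dy (f : field4) (Hf : C1_field f) c x y z xi :
  is_derive (fun w => hat c f xi x w z) y (pd_y f ((xi + z) / c) x y z).
Proof.
  exact (Derive_correct _ _ (proj1 (proj2 (proj2 (proj1 Hf ((xi + z) / c) x y z))))).
Qed.

Lemma hat_dz (f : field4) (Hf : C1_field f) c x y z xi : 0 < c ->
  is_derive (fun w => hat c f xi x y w) z (pd_t f ((xi + z) / c) x y z / c + pd_z f ((xi + z) / c) x y z).
Proof.
  intros Hc.
  eapply is_derive_val.
  - exact (chain4 f Hf (fun w => (xi + w) / c) (fun _ => x) (fun _ => y) (fun w => w) z _ _ _ _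
      (lin_d c z xi ltac:(lra)) (cstd x z) (cstd y z) (idd z)).
  - simpl. field. lra.
Qed.

Lemma hat_path (f : field4) (Hf : C1_field f) c (X Y Z : R -> R) xi dX dY dZ : 0 < c ->
  is_derive X xi dX -> is_derive Y xi dY -> is_derive Z xi dZ ->
  is_derive (fun w => hat c f w (X w) (Y w) (Z w)) xi
    (pd_t f ((xi + Z xi) / c) (X xi) (Y xi) (Z xi) * ((1 + dZ) / c)
     + pd_x f ((xi + Z xi) / c) (X xi) (Y xi) (Z xi) * dX
     + pd_y f ((xi + Z xi) / c) (X xi) (Y xi) (Z xi) * dY
     + pd_z f ((xi + Z xi) / c) (X xi) (Y xi) (Z xi) * dZ).
Proof.
  intros Hc HX HY HZ.
  assert (HT : is_derive (fun w => (w + Z w) / c) xi ((1 + dZ) / c)).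
  { auto_derive.
    - eexists; exact HZ.
    - replace (Derive (fun x => Z x) xi) with dZ by (symmetry; apply is_derive_unique; exact HZ).
      field; lra. }
  exact (chain4 f Hf (fun w => (w + Z w) / c) X Y Z xi _ _ _ _ HT HX HY HZ).
Qed.

Lemma dHdPx m c q F x y z Px Py Pz xi : 0 < m -> 0 < c ->
  s_hat m c q F x y z Px Py Pz xi <> 0 ->
  dH_dPx m c q F x y z Px Py Pz xi = dGf m c q Px Py Pz (hat c (A0 F) xi x y z)
    (hat c (Ax F) xi x y z) (hat c (Ay F) xi x y z) (hat c (Az F) xi x y z) 1 0 0 0 0 0 0.
Proof.
  intros Hm Hc HS. unfold dH_dPx. apply is_derive_unique.
  exact (G_deriv m c q (fun w => w) (fun _ => Py) (fun _ => Pz) (fun _ => hat c (A0 F) xi x y z)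
    (fun _ => hat c (Ax F) xi x y z) (fun _ => hat c (Ay F) xi x y z) (fun _ => hat c (Az F) xi x y z)
    Px 1 0 0 0 0 0 0 Hm Hc (idd _) (cstd _ _) (cstd _ _) (cstd _ _) (cstd _ _) (cstd _ _) (cstd _ _) HS).
Qed.

Lemma dHdPy m c q F x y z Px Py Pz xi : 0 < m -> 0 < c ->
  s_hat m c q F x y z Px Py Pz xi <> 0 ->
  dH_dPy m c q F x y z Px Py Pz xi = dGf m c q Px Py Pz (hat c (A0 F) xi x y z)
    (hat c (Ax F) xi x y z) (hat c (Ay F) xi x y z) (hat c (Az F) xi x y z) 0 1 0 0 0 0 0.
Proof.
  intros Hm Hc HS. unfold dH_dPy. apply is_derive_unique.
  exact (G_deriv m c q (fun _ => Px) (fun w => w) (fun _ => Pz) (fun _ => hat c (A0 F) xi x y z)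
    (fun _ => hat c (Ax F) xi x y z) (fun _ => hat c (Ay F) xi x y z) (fun _ => hat c (Az F) xi x y z)
    Py 0 1 0 0 0 0 0 Hm Hc (cstd _ _) (idd _) (cstd _ _) (cstd _ _) (cstd _ _) (cstd _ _) (cstd _ _) HS).
Qed.

Lemma dHdPz m c q F x y z Px Py Pz xi : 0 < m -> 0 < c ->
  s_hat m c q F x y z Px Py Pz xi <> 0 ->
  dH_dPz m c q F x y z Px Py Pz xi = dGf m c q Px Py Pz (hat c (A0 F) xi x y z)
    (hat c (Ax F) xi x y z) (hat c (Ay F) xi x y z) (hat c (Az F) xi x y z) 0 0 1 0 0 0 0.
Proof.
  intros Hm Hc HS. unfold dH_dPz. apply is_derive_unique.
  exact (G_deriv m c q (fun _ => Px) (fun _ => Py) (fun w => w) (fun _ => hat c (A0 F) xi x y z)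
    (fun _ => hat c (Ax F) xi x y z) (fun _ => hat c (Ay F) xi x y z) (fun _ => hat c (Az F) xi x y z)
    Pz 0 0 1 0 0 0 0 Hm Hc (cstd _ _) (cstd _ _) (idd _) (cstd _ _) (cstd _ _) (cstd _ _) (cstd _ _) HS).
Qed.

Lemma dHdx m c q F x y z Px Py Pz xi : 0 < m -> 0 < c ->
  C1_field (A0 F) -> C1_field (Ax F) -> C1_field (Ay F) -> C1_field (Az F) ->
  s_hat m c q F x y z Px Py Pz xi <> 0 ->
  dH_dx m c q F x y z Px Py Pz xi = dGf m c q Px Py Pz (hat c (A0 F) xi x y z)
    (hat c (Ax F) xi x y z) (hat c (Ay F) xi x y z) (hat c (Az F) xi x y z) 0 0 0
    (pd_x (A0 F) ((xi + z) / c) x y z) (pd_x (Ax F) ((xi + z) / c) x y z)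
    (pd_x (Ay F) ((xi + z) / c) x y z) (pd_x (Az F) ((xi + z) / c) x y z).
Proof.
  intros Hm Hc H0 H1 H2 H3 HS. unfold dH_dx. apply is_derive_unique.
  exact (G_deriv m c q (fun _ => Px) (fun _ => Py) (fun _ => Pz) (fun w => hat c (A0 F) xi w y z)
    (fun w => hat c (Ax F) xi w y z) (fun w => hat c (Ay F) xi w y z) (fun w => hat c (Az F) xi w y z)
    x 0 0 0 _ _ _ _ Hm Hc (cstd _ _) (cstd _ _) (cstd _ _)
    (hat_dx _ H0 c x y z xi) (hat_dx _ H1 c x y z xi) (hat_dx _ H2 c x y z xi) (hat_dx _ H3 c x y z xi) HS).
Qed.

Lemma dHdy m c q F x y z Px Py Pz xi : 0 < m -> 0 < c ->
  C1_field (A0 F) -> C1_field (Ax F) -> C1_field (Ay F) -> C1_field (Az F) ->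
  s_hat m c q F x y z Px Py Pz xi <> 0 ->
  dH_dy m c q F x y z Px Py Pz xi = dGf m c q Px Py Pz (hat c (A0 F) xi x y z)
    (hat c (Ax F) xi x y z) (hat c (Ay F) xi x y z) (hat c (Az F) xi x y z) 0 0 0
    (pd_y (A0 F) ((xi + z) / c) x y z) (pd_y (Ax F) ((xi + z) / c) x y z)
    (pd_y (Ay F) ((xi + z) / c) x y z) (pd_y (Az F) ((xi + z) / c) x y z).
Proof.
  intros Hm Hc H0 H1 H2 H3 HS. unfold dH_dy. apply is_derive_unique.
  exact (G_deriv m c q (fun _ => Px) (fun _ => Py) (fun _ => Pz) (fun w => hat c (A0 F) xi x w z)
    (fun w => hat c (Ax F) xi x w z) (fun w => hat c (Ay F) xi x w z) (fun w => hat c (Az F) xi x w z)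
    y 0 0 0 _ _ _ _ Hm Hc (cstd _ _) (cstd _ _) (cstd _ _)
    (hat_dy _ H0 c x y z xi) (hat_dy _ H1 c x y z xi) (hat_dy _ H2 c x y z xi) (hat_dy _ H3 c x y z xi) HS).
Qed.

Lemma dHdz m c q F x y z Px Py Pz xi : 0 < m -> 0 < c ->
  C1_field (A0 F) -> C1_field (Ax F) -> C1_field (Ay F) -> C1_field (Az F) ->
  s_hat m c q F x y z Px Py Pz xi <> 0 ->
  dH_dz m c q F x y z Px Py Pz xi = dGf m c q Px Py Pz (hat c (A0 F) xi x y z)
    (hat c (Ax F) xi x y z) (hat c (Ay F) xi x y z) (hat c (Az F) xi x y z) 0 0 0
    (pd_t (A0 F) ((xi + z) / c) x y z / c + pd_z (A0 F) ((xi + z) / c) x y z)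
    (pd_t (Ax F) ((xi + z) / c) x y z / c + pd_z (Ax F) ((xi + z) / c) x y z)
    (pd_t (Ay F) ((xi + z) / c) x y z / c + pd_z (Ay F) ((xi + z) / c) x y z)
    (pd_t (Az F) ((xi + z) / c) x y z / c + pd_z (Az F) ((xi + z) / c) x y z).
Proof.
  intros Hm Hc H0 H1 H2 H3 HS. unfold dH_dz. apply is_derive_unique.
  exact (G_deriv m c q (fun _ => Px) (fun _ => Py) (fun _ => Pz) (fun w => hat c (A0 F) xi x y w)
    (fun w => hat c (Ax F) xi x y w) (fun w => hat c (Ay F) xi x y w) (fun w => hat c (Az F) xi x y w)
    z 0 0 0 _ _ _ _ Hm Hc (cstd _ _) (cstd _ _) (cstd _ _)
    (hat_dz _ H0 c x y z xi Hc) (hat_dz _ H1 c x y z xi Hc) (hat_dz _ H2 c x y z xi Hc) (hat_dz _ H3 c x y z xi Hc) HS).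
Qed.

Lemma path_deriv m c q F a b X Y Z PX PY PZ xi : 0 < m -> 0 < c ->
  C1_field (A0 F) -> C1_field (Ax F) -> C1_field (Ay F) -> C1_field (Az F) ->
  hamilton_solution m c q F a b X Y Z PX PY PZ -> a < xi < b ->
  is_derive (fun w => H_hat m c q F (X w) (Y w) (Z w) (PX w) (PY w) (PZ w) w) xi
   (dGf m c q (PX xi) (PY xi) (PZ xi) (hat c (A0 F) xi (X xi) (Y xi) (Z xi))
     (hat c (Ax F) xi (X xi) (Y xi) (Z xi)) (hat c (Ay F) xi (X xi) (Y xi) (Z xi))
     (hat c (Az F) xi (X xi) (Y xi) (Z xi)) 0 0 0
     (pd_t (A0 F) ((xi + Z xi) / c) (X xi) (Y xi) (Z xi) / c)
     (pd_t (Ax F) ((xi + Z xi) / c) (X xi) (Y xi) (Z xi) / c)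
     (pd_t (Ay F) ((xi + Z xi) / c) (X xi) (Y xi) (Z xi) / c)
     (pd_t (Az F) ((xi + Z xi) / c) (X xi) (Y xi) (Z xi) / c)).
Proof.
  intros Hm Hc H0 H1 H2 H3 Hsol Hxi.
  destruct (Hsol xi Hxi) as [Hs [HX [HY [HZ [HPX [HPY HPZ]]]]]].
  assert (Hs' : s_hat m c q F (X xi) (Y xi) (Z xi) (PX xi) (PY xi) (PZ xi) xi <> 0) by lra.
  rewrite (dHdPx m c q F _ _ _ _ _ _ _ Hm Hc Hs') in HX.
  rewrite (dHdPy m c q F _ _ _ _ _ _ _ Hm Hc Hs') in HY.
  rewrite (dHdPz m c q F _ _ _ _ _ _ _ Hm Hc Hs') in HZ.
  rewrite (dHdx m c q F _ _ _ _ _ _ _ Hm Hc H0 H1 H2 H3 Hs') in HPX.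
  rewrite (dHdy m c q F _ _ _ _ _ _ _ Hm Hc H0 H1 H2 H3 Hs') in HPY.
  rewrite (dHdz m c q F _ _ _ _ _ _ _ Hm Hc H0 H1 H2 H3 Hs') in HPZ.
  eapply is_derive_val.
  - exact (G_deriv m c q PX PY PZ (fun w => hat c (A0 F) w (X w) (Y w) (Z w))
      (fun w => hat c (Ax F) w (X w) (Y w) (Z w)) (fun w => hat c (Ay F) w (X w) (Y w) (Z w))
      (fun w => hat c (Az F) w (X w) (Y w) (Z w)) xi _ _ _ _ _ _ _ Hm Hc HPX HPY HPZ
      (hat_path _ H0 c X Y Z xi _ _ _ Hc HX HY HZ)
      (hat_path _ H1 c X Y Z xi _ _ _ Hc HX HY HZ)
      (hat_path _ H2 c X Y Z xi _ _ _ Hc HX HY HZ)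
      (hat_path _ H3 c X Y Z xi _ _ _ Hc HX HY HZ) Hs').
  - match goal with |- ?u = ?v => change (@eq R u v) end. cbv beta. unfold dGf. unfold Rdiv. ring.
Qed.

Lemma v_deriv m c q Px Py (ax ay : R -> R) xi d5 d6 : 0 < m -> 0 < c ->
  is_derive ax xi d5 -> is_derive ay xi d6 ->
  is_derive (fun w => Uf m c q Px (ax w) ^ 2 + Uf m c q Py (ay w) ^ 2) xi
    (2 * Uf m c q Px (ax xi) * (- q * d5 / (m * c ^ 2))
     + 2 * Uf m c q Py (ay xi) * (- q * d6 / (m * c ^ 2))).
Proof.
  intros Hm Hc H5 H6.
  assert (HK : m * c ^ 2 <> 0) by (apply Rgt_not_eq; apply Rmult_gt_0_compat; [lra| apply pow_lt; lra]).
  unfold Uf. auto_derive.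
  - repeat split; try (eexists; eassumption); simpl in HK; rewrite Rmult_1_r in HK; auto.
  - replace (Derive (fun x => ax x) xi) with d5 by (symmetry; apply is_derive_unique; exact H5).
    replace (Derive (fun x => ay x) xi) with d6 by (symmetry; apply is_derive_unique; exact H6).
    match goal with |- ?u = ?v => change (@eq R u v) end.
    field. split; lra.
Qed.

Lemma dv_eq m c q F x y z Px Py Pz xi : 0 < m -> 0 < c ->
  C1_field (Ax F) -> C1_field (Ay F) ->
  dv_dxi m c q F x y z Px Py Pz xi =
    2 * Uf m c q Px (hat c (Ax F) xi x y z) * (- q * (pd_t (Ax F) ((xi + z) / c) x y z / c) / (m * c ^ 2))
  + 2 * Uf m c q Py (hat c (Ay F) xi x y z) * (- q * (pd_t (Ay F) ((xi + z) / c) x y z / c) / (m * c ^ 2)).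
Proof.
  intros Hm Hc H1 H2. unfold dv_dxi. apply is_derive_unique.
  exact (v_deriv m c q Px Py (fun w => hat c (Ax F) w x y z) (fun w => hat c (Ay F) w x y z) xi _ _ Hm Hc
    (hat_dxi _ H1 c x y z xi Hc) (hat_dxi _ H2 c x y z xi Hc)).
Qed.

Lemma comp_cont (g : field4) (T X Y Z : R -> R) xi dT dX dY dZ :
  continuous (uncurry4 g) (T xi, X xi, Y xi, Z xi) ->
  is_derive T xi dT -> is_derive X xi dX -> is_derive Y xi dY -> is_derive Z xi dZ ->
  continuous (fun w => g (T w) (X w) (Y w) (Z w)) xi.
Proof.
  intros Hg HT HX HY HZ.
  apply continuity_pt_filterlim.
  unfold continuity_pt, continue_in, limit1_in, limit_in.
  intros eps He.
  destruct (cont4_ed _ _ _ _ _ Hg eps He) as [d0 [Hd0 Hd0']].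
  destruct (deriv_cont_ed T xi dT HT d0 Hd0) as [d1 [Hd1 Hd1']].
  destruct (curves_close X Y Z xi dX dY dZ HX HY HZ d0 Hd0) as [d2 [Hd2 Hd2']].
  exists (Rmin d1 d2). split; [apply Rmin_glb_lt; auto|].
  intros x [_ Hx]. simpl in *. unfold R_dist in *.
  assert (Rmin d1 d2 <= d1) by apply Rmin_l. assert (Rmin d1 d2 <= d2) by apply Rmin_r.
  replace x with (xi + (x - xi)) by ring.
  destruct (Hd2' (x - xi)) as [A1 [A2 A3]]; [lra|].
  apply Hd0'; auto. apply Hd1'. lra.
Qed.

Lemma cM (f g : R -> R) x : continuous f x -> continuous g x -> continuous (fun y => f y * g y) x.
Proof. intros; apply (continuous_mult f g); auto. Qed.
Lemma cPl (f g : R -> R) x : continuous f x -> continuous g x -> continuous (fun y => f y + g y) x.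
Proof. intros; apply (continuous_plus f g); auto. Qed.
Lemma cMn (f g : R -> R) x : continuous f x -> continuous g x -> continuous (fun y => f y - g y) x.
Proof. intros; apply (continuous_minus f g); auto. Qed.
Lemma cN (f : R -> R) x : continuous f x -> continuous (fun y => - f y) x.
Proof. intros; apply (continuous_opp f); auto. Qed.
Lemma cC (a : R) x : continuous (fun _ : R => a) x.
Proof. apply continuous_const. Qed.
Lemma cD (f g : R -> R) x : continuous f x -> continuous g x -> g x <> 0 -> continuous (fun y => f y / g y) x.
Proof. intros. unfold Rdiv. apply (cM f (fun y => / g y)); auto. apply continuous_Rinv_comp; auto. Qed.
Lemma cDer (f : R -> R) x l : is_derive f x l -> continuous f x.
Proof. intros H. apply (ex_derive_continuous (K:=R_AbsRing) (V:=R_NormedModule)). eexists; eauto. Qed.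

Lemma E_cont m c q (PX PY PZ a0 ax ay az ptx pty : R -> R) xi : 0 < m -> 0 < c ->
  continuous PX xi -> continuous PY xi -> continuous PZ xi -> continuous a0 xi ->
  continuous ax xi -> continuous ay xi -> continuous az xi -> continuous ptx xi -> continuous pty xi ->
  Sf m c q (PZ xi) (a0 xi) (az xi) <> 0 ->
  continuous (fun w => 1 / (2 * Sf m c q (PZ w) (a0 w) (az w)) *
    (2 * Uf m c q (PX w) (ax w) * (- q * (ptx w / c) / (m * c ^ 2))
   + 2 * Uf m c q (PY w) (ay w) * (- q * (pty w / c) / (m * c ^ 2)))) xi.
Proof.
  intros Hm Hc CPX CPY CPZ C0 Cx Cy Cz Ctx Cty HS.
  assert (HK : m * c ^ 2 <> 0) by (apply Rgt_not_eq; apply Rmult_gt_0_compat; [lra| apply pow_lt; lra]).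
  assert (CS : continuous (fun w => Sf m c q (PZ w) (a0 w) (az w)) xi).
  { unfold Sf. apply cD; [| apply cC| auto]. apply cN. apply cPl; auto. apply cM; [apply cC|].
    apply cMn; auto. }
  apply cM.
  - apply cD; [apply cC| apply cM; [apply cC|auto]|]. lra.
  - apply cPl.
    + apply cM; [apply cM; [apply cC|]|].
      * unfold Uf. apply cD; [|apply cC|auto]. apply cMn; auto. apply cM; [apply cC|auto].
      * apply cD; [|apply cC|auto]. apply cM; [apply cC|]. apply cD; [auto|apply cC|lra].
    + apply cM; [apply cM; [apply cC|]|].
      * unfold Uf. apply cD; [|apply cC|auto]. apply cMn; auto. apply cM; [apply cC|auto].
      * apply cD; [|apply cC|auto]. apply cM; [apply cC|]. apply cD; [auto|apply cC|lra].
Qed.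

Lemma Tder c (Z : R -> R) xi dZ : 0 < c -> is_derive Z xi dZ ->
  is_derive (fun w => (w + Z w) / c) xi ((1 + dZ) / c).
Proof.
  intros Hc HZ. auto_derive.
  - eexists; exact HZ.
  - replace (Derive (fun x => Z x) xi) with dZ by (symmetry; apply is_derive_unique; exact HZ).
    field; lra.
Qed.

Lemma in_ab a b x0 x1 x : a < x0 < b -> a < x1 < b -> Rmin x0 x1 <= x <= Rmax x0 x1 -> a < x < b.
Proof. intros. unfold Rmin, Rmax in *. destruct (Rle_dec x0 x1); lra. Qed.

Theorem corollary1 (m c q : R) (F : EMPot)
  (Hm : 0 < m) (Hc : 0 < c)
  (HA0 : C1_field (A0 F)) (HAx : C1_field (Ax F))
  (HAy : C1_field (Ay F)) (HAz : C1_field (Az F)) :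
  (forall (D : R -> R -> R -> R -> Prop) (a b : R) (X Y Z PX PY PZ : R -> R),
     hamilton_solution m c q F a b X Y Z PX PY PZ ->
     (forall t x y z, D t x y z ->
        pd_t (A0 F) t x y z = 0 /\ pd_t (Ax F) t x y z = 0 /\
        pd_t (Ay F) t x y z = 0 /\ pd_t (Az F) t x y z = 0) ->
     (forall xi, a < xi < b -> D ((xi + Z xi) / c) (X xi) (Y xi) (Z xi)) ->
     forall xi0 xi1, a < xi0 < b -> a < xi1 < b ->
       H_hat m c q F (X xi1) (Y xi1) (Z xi1) (PX xi1) (PY xi1) (PZ xi1) xi1 =
       H_hat m c q F (X xi0) (Y xi0) (Z xi0) (PX xi0) (PY xi0) (PZ xi0) xi0) /\
  (forall (D : R -> R -> R -> R -> Prop) (a b : R) (X Y Z PX PY PZ : R -> R),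
     hamilton_solution m c q F a b X Y Z PX PY PZ ->
     (forall t x y z, D t x y z ->
        pd_t (A0 F) t x y z = 0 /\ pd_t (Az F) t x y z = 0) ->
     (forall xi, a < xi < b -> D ((xi + Z xi) / c) (X xi) (Y xi) (Z xi)) ->
     forall xi0 xi1, a < xi0 < b -> a < xi1 < b ->
       (H_hat m c q F (X xi1) (Y xi1) (Z xi1) (PX xi1) (PY xi1) (PZ xi1) xi1 -
        H_hat m c q F (X xi0) (Y xi0) (Z xi0) (PX xi0) (PY xi0) (PZ xi0) xi0)
         / (m * c ^ 2) =
       RInt (fun xi =>
               1 / (2 * s_hat m c q F (X xi) (Y xi) (Z xi) (PX xi) (PY xi) (PZ xi) xi)
               * dv_dxi m c q F (X xi) (Y xi) (Z xi) (PX xi) (PY xi) (PZ xi) xi)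
            xi0 xi1).
Proof.
  assert (HK : m * c ^ 2 <> 0) by (apply Rgt_not_eq; apply Rmult_gt_0_compat; [lra| apply pow_lt; lra]).
  split.
  - intros D a b X Y Z PX PY PZ Hsol HD Hpath xi0 xi1 H0 H1.
    set (Hf := fun w => H_hat m c q F (X w) (Y w) (Z w) (PX w) (PY w) (PZ w) w).
    assert (Hder : forall x, a < x < b -> is_derive Hf x 0).
    { intros x Hx. eapply is_derive_val.
      - exact (path_deriv m c q F a b X Y Z PX PY PZ x Hm Hc HA0 HAx HAy HAz Hsol Hx).
      - destruct (HD _ _ _ _ (Hpath x Hx)) as [E0 [E1 [E2 E3]]].
        rewrite E0, E1, E2, E3. match goal with |- ?u = ?v => change (@eq R u v) end. unfold dGf, Rdiv. ring. }
    destruct (MVT_gen Hf xi0 xi1 (fun _ => 0)) as [cc [_ Hcc]].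
    + intros x Hx. apply Hder. apply (in_ab a b xi0 xi1); auto. lra.
    + intros x Hx. apply continuity_pt_filterlim. apply (cDer Hf x 0). apply Hder.
      apply (in_ab a b xi0 xi1); auto.
    + change (Hf xi1 = Hf xi0). lra.
  - intros D a b X Y Z PX PY PZ Hsol HD Hpath xi0 xi1 H0 H1.
    set (f := fun w => / (m * c ^ 2) * H_hat m c q F (X w) (Y w) (Z w) (PX w) (PY w) (PZ w) w).
    set (g := fun xi => 1 / (2 * s_hat m c q F (X xi) (Y xi) (Z xi) (PX xi) (PY xi) (PZ xi) xi)
               * dv_dxi m c q F (X xi) (Y xi) (Z xi) (PX xi) (PY xi) (PZ xi) xi).
    assert (Hder : forall x, a < x < b -> is_derive f x (g x)).
    { intros x Hx. eapply is_derive_val.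
      - apply is_derive_scal.
        exact (path_deriv m c q F a b X Y Z PX PY PZ x Hm Hc HA0 HAx HAy HAz Hsol Hx).
      - destruct (HD _ _ _ _ (Hpath x Hx)) as [E0 E3].
        destruct (Hsol x Hx) as [Hs _].
        rewrite E0, E3. unfold g. rewrite dv_eq; auto. match goal with |- ?u = ?v => change (@eq R u v) end.
        assert (HS : Sf m c q (PZ x) (hat c (A0 F) x (X x) (Y x) (Z x)) (hat c (Az F) x (X x) (Y x) (Z x)) <> 0)
          by (change (s_hat m c q F (X x) (Y x) (Z x) (PX x) (PY x) (PZ x) x <> 0); lra).
        unfold s_hat in *. unfold dGf, cPx, cPy, cPz, c0, cx, cy, cz. unfold Sf, GSf, Uf in *. field.
        repeat split; try lra; try (unfold Sf; exact HS); intro E; apply HS; rewrite E; field; split; lra. }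
    assert (Hcont : forall x, Rmin xi0 xi1 <= x <= Rmax xi0 xi1 -> continuous g x).
    { intros x Hx. pose proof (in_ab a b xi0 xi1 x H0 H1 Hx) as Hx'.
      destruct (Hsol x Hx') as [Hs [HX [HY [HZ [HPX [HPY HPZ]]]]]].
      pose proof (Tder c Z x _ Hc HZ) as HT.
      apply (continuous_ext (fun w => 1 / (2 * Sf m c q (PZ w) (hat c (A0 F) w (X w) (Y w) (Z w))
                                           (hat c (Az F) w (X w) (Y w) (Z w))) *
          (2 * Uf m c q (PX w) (hat c (Ax F) w (X w) (Y w) (Z w)) *
             (- q * (pd_t (Ax F) ((w + Z w) / c) (X w) (Y w) (Z w) / c) / (m * c ^ 2))
         + 2 * Uf m c q (PY w) (hat c (Ay F) w (X w) (Y w) (Z w)) *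
             (- q * (pd_t (Ay F) ((w + Z w) / c) (X w) (Y w) (Z w) / c) / (m * c ^ 2))))).
      { intros w. unfold g. rewrite dv_eq; auto. }
      apply (E_cont m c q PX PY PZ (fun w => hat c (A0 F) w (X w) (Y w) (Z w))
        (fun w => hat c (Ax F) w (X w) (Y w) (Z w)) (fun w => hat c (Ay F) w (X w) (Y w) (Z w))
        (fun w => hat c (Az F) w (X w) (Y w) (Z w))
        (fun w => pd_t (Ax F) ((w + Z w) / c) (X w) (Y w) (Z w))
        (fun w => pd_t (Ay F) ((w + Z w) / c) (X w) (Y w) (Z w)) x Hm Hc).
      * exact (cDer _ _ _ HPX).
      * exact (cDer _ _ _ HPY).
      * exact (cDer _ _ _ HPZ).
      * exact (cDer _ _ _ (hat_path _ HA0 c X Y Z x _ _ _ Hc HX HY HZ)).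
      * exact (cDer _ _ _ (hat_path _ HAx c X Y Z x _ _ _ Hc HX HY HZ)).
      * exact (cDer _ _ _ (hat_path _ HAy c X Y Z x _ _ _ Hc HX HY HZ)).
      * exact (cDer _ _ _ (hat_path _ HAz c X Y Z x _ _ _ Hc HX HY HZ)).
      * exact (comp_cont _ (fun w => (w + Z w) / c) X Y Z x _ _ _ _
          (proj1 (proj2 (proj2 HAx ((x + Z x) / c, X x, Y x, Z x)))) HT HX HY HZ).
      * exact (comp_cont _ (fun w => (w + Z w) / c) X Y Z x _ _ _ _
          (proj1 (proj2 (proj2 HAy ((x + Z x) / c, X x, Y x, Z x)))) HT HX HY HZ).
      * change (s_hat m c q F (X x) (Y x) (Z x) (PX x) (PY x) (PZ x) x <> 0). lra. }
    assert (HI := is_RInt_derive f g xi0 xi1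
      (fun x Hx => Hder x (in_ab a b xi0 xi1 x H0 H1 Hx)) Hcont).
    rewrite (is_RInt_unique g xi0 xi1 _ HI).
    unfold f, minus, plus, opp; simpl. field. split; lra.
Qed.
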